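(* Fix a monomial order on $S$. Let $J$ be a binomial ideal of $S$ and let $(E_i)_{i\in\Lambda}$ be a family of monomial ideals of $S$. Assume that for each $i\in\Lambda$, $F_i\supseteq E_i$ is a monomial ideal such that $(J,F_i)$ is a G-nice pair and $J+E_i=J+F_i$. Then $$\bigcap_{i\in\Lambda}(J+E_i)=J+\bigcap_{i\in\Lambda}\widehat{E_i}=J+\bigcap_{i\in\Lambda}F_i,$$ where each $\widehat{E_i}$ is taken with respect to $J$.
   Context: $K$ is a field and $S=K[x_1,\ldots,x_n]$ with a fixed monomial order. For $0\neq f\in S$, $\mathrm{in}(f)$ denotes its leading monomial; for an ideal $I$, $\mathrm{in}(I)$ is the ideal generated by the leading monomials of the nonzero elements of $I$. A pair $(J,E)$ of ideals is G-nice if $\mathrm{in}(J+E)=\mathrm{in}(J)+\mathrm{in}(E)$. A binomial ideal is an ideal generated by binomials. For an ideal $J$ and a monomial ideal $E$, $\widehat E$ (the G-nice monomial closure of $E$ with respect to $J$) is the intersection of all monomial ideals $F$ of $S$ with $E\subseteq F$ and $(J,F)$ G-nice. *)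

(* Defs.v *)
From mathcomp Require Import all_boot all_algebra.
From mathcomp Require Import mpoly.
Set Implicit Arguments. Unset Strict Implicit. Unset Printing Implicit Defensive.
Import GRing.Theory.
Local Open Scope ring_scope.

Section Defs.
Variables (n : nat) (K : fieldType).
Local Notation S := {mpoly K[n]}.
Local Notation mon := 'X_{1..n}.

(* Subsets of S (Prop-valued, to allow arbitrary intersections). *)
Definition pset := S -> Prop.
Definition psubset (A B : pset) := forall p, A p -> B p.
Definition pseteq (A B : pset) := forall p, A p <-> B p.

(* A monomial order: a total order on monomials, compatible with
   multiplication, with 1 as least element (hence a well-order). *)
Definition monomial_order (le : mon -> mon -> bool) : Prop :=
  [/\ (forall m, le m m),
      (forall m1 m2, le m1 m2 -> le m2 m1 -> m1 = m2),
      (forall m1 m2 m3, le m1 m2 -> le m2 m3 -> le m1 m3)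
      /\ (forall m1 m2, le m1 m2 || le m2 m1),
      (forall m1 m2 m3, le m1 m2 -> le (mnm_add m1 m3) (mnm_add m2 m3)) &
      (forall m, le (@mnm0 n) m)].

Definition is_ideal (I : pset) : Prop :=
  [/\ I 0, (forall a b, I a -> I b -> I (a + b)) & (forall r a, I a -> I (r * a))].

Definition ideal_gen (G : pset) : pset :=
  fun p => forall I, is_ideal I -> psubset G I -> I p.

Definition ideal_add (I J : pset) : pset :=
  fun p => exists a b, [/\ I a, J b & p = a + b].

Definition ideal_cap (L : Type) (I : L -> pset) : pset := fun p => forall i, I i p.

Definition is_monomial_ideal (E : pset) : Prop :=
  exists M : mon -> Prop, pseteq E (ideal_gen (fun p => exists2 m, M m & p = 'X_[m])).

Definition is_binomial (f : S) : Prop := (size (msupp f) <= 2)%N.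

Definition is_binomial_ideal (J : pset) : Prop :=
  exists B : pset, psubset B is_binomial /\ pseteq J (ideal_gen B).

Definition is_lead_mon (le : mon -> mon -> bool) (f : S) (m : mon) : Prop :=
  m \in msupp f /\ forall m', m' \in msupp f -> le m' m.

Definition init_ideal le (I : pset) : pset :=
  ideal_gen (fun p => exists m f, [/\ I f, f != 0, is_lead_mon le f m & p = 'X_[m]]).

Definition Gnice le (J E : pset) : Prop :=
  pseteq (init_ideal le (ideal_add J E)) (ideal_add (init_ideal le J) (init_ideal le E)).

Definition Gnice_closure le (J E : pset) : pset :=
  fun p => forall F, is_monomial_ideal F -> psubset E F -> Gnice le J F -> F p.

End Defs.

(* Main.v *)
Require Import Defs.
From mathcomp Require Import all_boot all_algebra.
From mathcomp Require Import mpoly.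
From Stdlib Require Import Classical.
Set Implicit Arguments. Unset Strict Implicit. Unset Printing Implicit Defensive.
Import GRing.Theory.

Section Dickson.
Variable n : nat.
Local Notation mon := 'X_{1..n}.

Lemma dickson_k (k : nat) (A : mon -> Prop) :
  exists s : seq mon, (forall b, b \in s -> A b) /\
    forall a, A a -> exists2 b, b \in s & forall i : 'I_n, (i < k)%N -> (b i <= a i)%N.
Proof.
elim: k A => [|k IH] A.
  case: (classic (exists a, A a)) => [[a Ha]|Hn].
    exists [:: a]; split; first by move=> b; rewrite mem_seq1 => /eqP ->.
    by move=> a' _; exists a; rewrite ?mem_seq1.
  exists [::]; split => // a Ha; exfalso; apply: Hn; by exists a.
pose co (a : mon) := nth 0%N a k.
have coE : forall (a : mon) (i : 'I_n), val i = k -> a i = co a.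
  by move=> a i ik; rewrite /co -ik (mnm_nth 0%N).
have low : forall N, exists s : seq mon, (forall b, b \in s -> A b) /\
    forall a, A a -> (co a < N)%N ->
      exists2 b, b \in s & forall i : 'I_n, (i < k.+1)%N -> (b i <= a i)%N.
  elim=> [|N [s [sA sP]]].
    by exists [::]; split.
  have [t [tA tP]] := IH (fun a => A a /\ co a = N).
  exists (s ++ t); split.
    by move=> b; rewrite mem_cat => /orP [/sA //| /tA []].
  move=> a Ha; rewrite ltnS leq_eqVlt => /orP [/eqP caN | caN].
    have [b bt bP] := tP a (conj Ha caN).
    exists b; first by rewrite mem_cat bt orbT.
    move=> i; rewrite ltnS leq_eqVlt => /orP [/eqP ik | ik]; last exact: bP.
    have [_ cb] := tA b bt.
    by rewrite !(coE _ _ ik) cb caN.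
  have [b bs bP] := sP a Ha caN.
  by exists b => //; rewrite mem_cat bs.
have [B0 [B0A B0P]] := IH A.
pose N := \max_(b <- B0) co b.
have [s [sA sP]] := low N.
exists (B0 ++ s); split.
  by move=> b; rewrite mem_cat => /orP [/B0A | /sA].
move=> a Ha; case: (ltnP (co a) N) => caN.
  have [b bs bP] := sP a Ha caN.
  by exists b => //; rewrite mem_cat bs orbT.
have [b bB bP] := B0P a Ha.
exists b; first by rewrite mem_cat bB.
move=> i; rewrite ltnS leq_eqVlt => /orP [/eqP ik | ik]; last exact: bP.
rewrite !(coE _ _ ik); apply: leq_trans caN.
by apply: (@leq_bigmax_seq _ B0 xpredT co b).
Qed.

Lemma dickson (A : mon -> Prop) :
  exists s : seq mon, (forall b, b \in s -> A b) /\
    forall a, A a -> exists2 b, b \in s & (b <= a)%MM.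
Proof.
have [s [sA sP]] := dickson_k n A.
exists s; split => // a /sP [b bs bP]; exists b => //.
by apply/mnm_lepP => i; apply: bP.
Qed.
End Dickson.
Section Ord.
Variables (n : nat) (le : 'X_{1..n} -> 'X_{1..n} -> bool).
Local Notation mon := 'X_{1..n}.

Lemma list_ext (R : mon -> mon -> bool) (Rtot : forall x y, R x y || R y x)
  (Rtr : forall x y z, R x y -> R y z -> R x z) (s : seq mon) (P : mon -> Prop) :
  (exists2 x, x \in s & P x) ->
  exists x, [/\ x \in s, P x & forall y, y \in s -> P y -> R y x].
Proof.
elim: s => [[x]//|a s IH] [x xs Px].
have Rr : forall z, R z z by move=> z; case/orP: (Rtot z z).
case: (classic (exists2 x, x \in s & P x)) => [H|H].
  have [y [ys Py yM]] := IH H.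
  have ya : forall z, z \in a :: s -> P z -> z != a -> R z y.
    by move=> z; rewrite inE => /orP [/eqP -> _ /eqP //| zs Pz _]; apply: yM.
  case: (classic (P a)) => Pa; last first.
    exists y; split => //; first by rewrite inE ys orbT.
    move=> z zs Pz; apply: ya => //; apply/eqP => za; apply: Pa; by rewrite -za.
  case/orP: (Rtot a y) => ay.
    exists y; split => //; first by rewrite inE ys orbT.
    move=> z zs Pz; case: (eqVneq z a) => [->//|]; exact: ya.
  exists a; split => //; first by rewrite inE eqxx.
  move=> z zs Pz; case: (eqVneq z a) => [->//|za]; exact: Rtr (ya _ zs Pz za) ay.
have Pa : P a.
  move: xs; rewrite inE => /orP [/eqP <- //| xs]; exfalso; apply: H; by exists x.
exists a; split => //; first by rewrite inE eqxx.
move=> z; rewrite inE => /orP [/eqP -> //| zs Pz].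
by exfalso; apply: H; exists z.
Qed.

Hypothesis hle : monomial_order le.

Lemma le_refl m : le m m. Proof. by case: hle. Qed.
Lemma le_anti m1 m2 : le m1 m2 -> le m2 m1 -> m1 = m2.
Proof. by case: hle => _ h _ _ _; apply: h. Qed.
Lemma le_trans m1 m2 m3 : le m1 m2 -> le m2 m3 -> le m1 m3.
Proof. by case: hle => _ _ [h _] _ _; apply: h. Qed.
Lemma le_total m1 m2 : le m1 m2 || le m2 m1. Proof. by case: hle => _ _ [_ h] _ _. Qed.
Lemma le_add m1 m2 m3 : le m1 m2 -> le (m1 + m3)%MM (m2 + m3)%MM.
Proof. by case: hle => _ _ _ h _; apply: h. Qed.
Lemma le_0 m : le 0%MM m. Proof. by case: hle. Qed.

Lemma le_div b a : (b <= a)%MM -> le b a.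
Proof.
move=> ba; rewrite -(submK ba); have := le_add b (le_0 (a - b)%MM).
by rewrite add0m addmC.
Qed.

Lemma le_nle m1 m2 : ~~ le m1 m2 -> le m2 m1.
Proof. by case/orP: (le_total m1 m2) => ->. Qed.

Lemma set_min (A : mon -> Prop) : (exists a, A a) ->
  exists b, A b /\ forall a, A a -> le b a.
Proof.
move=> [a0 Ha0].
have [s [sA sP]] := dickson A.
have [b0 b0s _] := sP a0 Ha0.
have [b [bs _ bm]] := @list_ext (fun x y => le y x)
   (fun x y => le_total y x) (fun x y z h1 h2 => le_trans h2 h1) s (fun _ => True)
   (ex_intro2 _ _ b0 b0s I).
exists b; split; first exact: sA.
move=> a /sP [c cs ca]; apply: le_trans (bm c cs I) (le_div ca).
Qed.

Definition lt (x y : mon) := le x y && (x != y).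

Lemma lt_wf : well_founded lt.
Proof.
move=> x; apply: NNPP => nA.
have [b [nb bm]] := set_min (ex_intro (fun y => ~ Acc lt y) x nA).
apply: nb; constructor => y /andP [yb ynb]; apply: NNPP => ny.
by move: ynb; rewrite (le_anti yb (bm _ ny)) eqxx.
Qed.

Lemma lead_exists (K : fieldType) (p : {mpoly K[n]}) : (p != 0)%R -> exists m, is_lead_mon le p m.
Proof.
move=> pn; case E: (msupp p) => [|a s].
  by move/eqP: E; rewrite msupp_eq0 (negbTE pn).
have aS : a \in msupp p by rewrite E inE eqxx.
have [m [ms _ mM]] := @list_ext le le_total le_trans (msupp p) (fun _ => True)
  (ex_intro2 _ _ a aS I).
by exists m; split => // y ys; apply: mM.
Qed.
End Ord.
Section Ideals.
Variables (n : nat) (K : fieldType).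
Local Notation S := {mpoly K[n]}.
Local Notation mon := 'X_{1..n}.
Local Open Scope ring_scope.

Lemma ideal_gen_ideal (G : pset n K) : is_ideal (ideal_gen G).
Proof.
split.
- by move=> I [].
- by move=> a b Ha Hb I hI sG; case: (hI) => _ hD _; apply: hD; [apply: Ha|apply: Hb].
- by move=> r a Ha I hI sG; case: (hI) => _ _ hM; apply: hM; apply: Ha.
Qed.

Lemma gen_in (G : pset n K) p : G p -> ideal_gen G p.
Proof. by move=> Gp I _ sG; apply: sG. Qed.

Lemma ideal_eq (I J : pset n K) : pseteq I J -> is_ideal I -> is_ideal J.
Proof.
move=> e [h0 hD hM]; split.
- by apply/e.
- by move=> a b /e Ha /e Hb; apply/e; apply: hD.
- by move=> r a /e Ha; apply/e; apply: hM.
Qed.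

Lemma idealD (I : pset n K) a b : is_ideal I -> I a -> I b -> I (a + b).
Proof. by case=> _ h _; apply: h. Qed.
Lemma idealM (I : pset n K) r a : is_ideal I -> I a -> I (r * a).
Proof. by case=> _ _ h; apply: h. Qed.
Lemma ideal0 (I : pset n K) : is_ideal I -> I 0.
Proof. by case. Qed.
Lemma idealN (I : pset n K) a : is_ideal I -> I a -> I (- a).
Proof. by move=> hI Ia; rewrite -mulN1r; apply: idealM. Qed.
Lemma idealB (I : pset n K) a b : is_ideal I -> I a -> I b -> I (a - b).
Proof. by move=> hI Ia Ib; apply: idealD => //; apply: idealN. Qed.

Lemma ideal_sum (I : pset n K) (T : Type) (r : seq T) (P : pred T) (F : T -> S) :
  is_ideal I -> (forall i, P i -> I (F i)) -> I (\sum_(i <- r | P i) F i).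
Proof.
move=> hI hF; elim: r => [|a r IH]; first by rewrite big_nil; apply: ideal0.
rewrite big_cons; case: ifP => Pa //; apply: idealD => //; exact: hF.
Qed.

Lemma char_mon (G : pset n K) (M : mon -> Prop)
  (hG : forall p, G p -> exists2 m, M m & p = 'X_[m]) p :
  ideal_gen G p -> forall k, k \in msupp p -> exists2 m0, M m0 & (m0 <= k)%MM.
Proof.
move=> Gp; apply: (Gp (fun q => forall k, k \in msupp q -> exists2 m0, M m0 & (m0 <= k)%MM)).
- split.
  + by move=> k; rewrite msupp0.
  + move=> a b Ha Hb k /msuppD_le; rewrite mem_cat => /orP [/Ha|/Hb] //.
  + move=> r a Ha k /msuppM_le /allpairsP [[x y] /= [_ ys ->]].
    have [m0 Mm0 m0y] := Ha y ys; exists m0 => //.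
    by apply: lepm_trans m0y _; apply: lem_addl.
- move=> q /hG [m Mm ->] k; rewrite msuppX mem_seq1 => /eqP ->.
  by exists m => //; apply: lepm_refl.
Qed.
End Ideals.
Section NF.
Variables (n : nat) (K : fieldType) (le : 'X_{1..n} -> 'X_{1..n} -> bool).
Hypothesis hle : monomial_order le.
Variable J : pset n K.
Hypothesis hJ : is_ideal J.
Local Notation S := {mpoly K[n]}.
Local Notation mon := 'X_{1..n}.
Local Open Scope ring_scope.

Definition Dj (k : mon) := exists h l, [/\ J h, h != 0, is_lead_mon le h l & (l <= k)%MM].

Definition reduced (g : S) := forall k, k \in msupp g -> ~ Dj k.

Lemma reduce_step (g : S) k0 : k0 \in msupp g -> Dj k0 ->
  (forall k, k \in msupp g -> Dj k -> le k k0) ->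
  exists j g', [/\ J j, g = j + g' &
     forall y, y \in msupp g' -> Dj y -> lt le y k0].
Proof.
move=> k0s [h [l [Jh hn [lh lM] lk]]] k0M.
set d := (k0 - l)%MM.
have k0E : k0 = (d + l)%MM by rewrite /d submK.
set h' := h * 'X_[d].
have h'k0 : h'@_k0 = h@_l by rewrite k0E mcoeffMX.
have hl0 : h@_l != 0 by rewrite -mcoeff_msupp.
have h'le : forall y, y \in msupp h' -> le y k0.
  move=> y; rewrite (perm_mem (msuppMX _ _)) => /mapP [x xs ->].
  by rewrite k0E addmC [(d + l)%MM]addmC; apply: le_add => //; apply: lM.
set c := g@_k0 / h@_l.
exists ((c%:MP * 'X_[d]) * h), (g - (c%:MP * 'X_[d]) * h); split.
- exact: idealM.
- by rewrite addrC subrK.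
have eqc : (c%:MP * 'X_[d]) * h = c *: h' by rewrite -mul_mpolyC /h' [h * _]mulrC mulrA.
rewrite eqc => y ys Dy.
have coef : forall z, (g - c *: h')@_z = g@_z - c * h'@_z by move=> z; rewrite mcoeffB mcoeffZ.
have yk0 : le y k0.
  apply: contraT => nle.
  have h'y : h'@_y = 0.
    by apply/eqP; rewrite mcoeff_eq0; apply: contra nle; apply: h'le.
  have gy : y \in msupp g by move: ys; rewrite !mcoeff_msupp coef h'y mulr0 subr0.
  by rewrite (k0M y gy Dy) in nle.
rewrite /lt yk0 /=; apply/eqP => yE; move: ys; rewrite yE mcoeff_msupp coef h'k0.
by rewrite /c divfK ?subrr ?eqxx.
Qed.

Lemma nf_bound m : forall g : S, (forall k, k \in msupp g -> Dj k -> le k m) ->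
  exists j g', [/\ J j, g = j + g' & reduced g'].
Proof.
elim/(well_founded_induction (lt_wf hle)): m => m IH g Hg.
case: (classic (exists2 k, k \in msupp g & Dj k)) => [Hb|Hb]; last first.
  exists 0, g; split; [exact: ideal0 | by rewrite add0r|].
  by move=> k ks Dk; apply: Hb; exists k.
have [k0 [k0s Dk0 k0M]] := list_ext (le_total hle) (le_trans hle) Hb.
have [j [g' [Jj gE g'b]]] := reduce_step k0s Dk0 k0M.
case: (classic (exists2 k, k \in msupp g' & Dj k)) => [Hb'|Hb']; last first.
  exists j, g'; split => // k ks Dk; apply: Hb'; by exists k.
have [k1 [k1s Dk1 k1M]] := list_ext (le_total hle) (le_trans hle) Hb'.
have /andP [k1k0 k1nk0] := g'b _ k1s Dk1.
have k0m := Hg _ k0s Dk0.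
have k1m : lt le k1 m.
  rewrite /lt (le_trans hle k1k0 k0m) /=; apply/eqP => e; move: k1nk0.
  by rewrite e (le_anti hle k0m) ?eqxx // -e.
have [j' [r [Jj' g'E rr]]] := IH k1 k1m g' k1M.
exists (j + j'), r; split => //; first exact: idealD.
by rewrite gE g'E addrA.
Qed.

Lemma nf (f : S) : exists j g, [/\ J j, f = j + g & reduced g].
Proof.
case: (classic (exists2 k, k \in msupp f & Dj k)) => [Hb|Hb]; last first.
  exists 0, f; split; [exact: ideal0 | by rewrite add0r|].
  by move=> k ks Dk; apply: Hb; exists k.
have [k0 [k0s Dk0 k0M]] := list_ext (le_total hle) (le_trans hle) Hb.
exact: (nf_bound k0M).
Qed.
End NF.
From Stdlib Require Import ClassicalEpsilon.

Section Main.
Variables (n : nat) (K : fieldType) (le : 'X_{1..n} -> 'X_{1..n} -> bool).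
Hypothesis hle : monomial_order le.
Local Notation S := {mpoly K[n]}.
Local Notation mon := 'X_{1..n}.
Local Open Scope ring_scope.

Definition pb (P : Prop) : bool := if excluded_middle_informative P then true else false.
Lemma pbP (P : Prop) : pb P <-> P.
Proof. by rewrite /pb; case: excluded_middle_informative. Qed.

Lemma nice_mem (J F : pset n K) (hJ : is_ideal J) (hF : is_monomial_ideal F)
  (hn : Gnice le J F) (g : S) : reduced le J g -> ideal_add J F g -> F g.
Proof.
move=> rg [a [b [Ja Fb gE]]].
have [M hM] := hF.
have hFi : is_ideal F by apply: ideal_eq (ideal_gen_ideal _); move=> p; split => /hM.
pose P k := exists2 m0, M m0 & (m0 <= k)%MM.
pose g1 := \sum_(k <- msupp g | pb (P k)) g@_k *: 'X_[k].
pose g2 := \sum_(k <- msupp g | ~~ pb (P k)) g@_k *: 'X_[k].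
have gsplit : g = g1 + g2 by rewrite {1}(mpolyE g) (bigID (fun k => pb (P k))).
have Fg1 : F g1.
  apply: ideal_sum => // k /pbP [m0 Mm0 m0k].
  rewrite -(submK m0k) mpolyXD -mul_mpolyC mulrA; apply: idealM => //.
  by apply/hM; apply: gen_in; exists m0.
have g2s : forall y, y \in msupp g2 -> y \in msupp g /\ ~ P y.
  move=> y /msupp_sum_le /flattenP [s /mapP [k]]; rewrite mem_filter => /andP [nP ks] ->.
  move=> /msuppZ_le; rewrite msuppX mem_seq1 => /eqP ->; split => //.
  by move/pbP; apply/negP.
suff g20 : g2 = 0 by rewrite gsplit g20 addr0.
apply/eqP; apply: contraT => g2n; exfalso.
have [m [ms mM]] := lead_exists hle g2n.
have [mg nPm] := g2s m ms.
have Ig2 : init_ideal le (ideal_add J F) 'X_[m].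
  apply: gen_in; exists m, g2; split => //.
  exists a, (b - g1); split => //; first exact: idealB.
  by rewrite addrA -gE {1}gsplit addrAC subrr add0r.
have [a' [b' [Ia' Ib' e]]] := (hn _).1 Ig2.
have : m \in msupp ('X_[m] : S) by rewrite msuppX mem_seq1.
rewrite e => /msuppD_le; rewrite mem_cat => /orP [ma|mb].
  have [m0 [f [Jf fn lf]] m0m] := char_mon (M := fun m => exists f, [/\ J f, f != 0 & is_lead_mon le f m])
     (fun p (h : exists m f, [/\ J f, f != 0, is_lead_mon le f m & p = 'X_[m]]) =>
        let: ex_intro m (ex_intro f (And4 h1 h2 h3 h4)) := h in
        ex_intro2 _ _ m (ex_intro _ f (And3 h1 h2 h3)) h4) Ia' ma.
  by apply: (rg m mg); exists f, m0.
have [m0 [f [Ff fn lf]] m0m] := char_mon (M := fun m => exists f, [/\ F f, f != 0 & is_lead_mon le f m])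
     (fun p (h : exists m f, [/\ F f, f != 0, is_lead_mon le f m & p = 'X_[m]]) =>
        let: ex_intro m (ex_intro f (And4 h1 h2 h3 h4)) := h in
        ex_intro2 _ _ m (ex_intro _ f (And3 h1 h2 h3)) h4) Ib' mb.
have [m1 Mm1 m1m0] := char_mon (M := M) (fun p (h : exists2 m, M m & p = 'X_[m]) => h)
   (proj1 (hM f) Ff) lf.1.
by apply: nPm; exists m1 => //; apply: lepm_trans m1m0 m0m.
Qed.
End Main.

Theorem mainTheorem13 (n : nat) (K : fieldType)
  (le : 'X_{1..n} -> 'X_{1..n} -> bool) (hle : monomial_order le)
  (J : pset n K) (hJ : is_binomial_ideal J)
  (L : Type) (E F : L -> pset n K)
  (hE : forall i, is_monomial_ideal (E i))
  (hF : forall i, is_monomial_ideal (F i))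
  (hEF : forall i, psubset (E i) (F i))
  (hnice : forall i, Gnice le J (F i))
  (hsum : forall i, pseteq (ideal_add J (E i)) (ideal_add J (F i))) :
  pseteq (ideal_cap (fun i => ideal_add J (E i)))
         (ideal_add J (ideal_cap (fun i => Gnice_closure le J (E i))))
  /\ pseteq (ideal_add J (ideal_cap (fun i => Gnice_closure le J (E i))))
            (ideal_add J (ideal_cap F)).
Proof.
Local Open Scope ring_scope.
have [B [_ JB]] := hJ.
have hJi : is_ideal J.
  by apply: ideal_eq (ideal_gen_ideal B); move=> p; split => /JB.
have CF : forall i p, Gnice_closure le J (E i) p -> F i p.
  by move=> i p h; apply: h; [apply: hF | apply: hEF | apply: hnice].
have key : forall f, ideal_cap (fun i => ideal_add J (E i)) f ->
    ideal_add J (ideal_cap (fun i => Gnice_closure le J (E i))) f.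
  move=> f hf; have [j [g [Jj fE rg]]] := nf hle hJi f.
  exists j, g; split => // i F' hF' sE nF'.
  apply: (nice_mem hle hJi hF' nF' rg).
  have [a [b [Ja Eb fab]]] := hf i.
  exists (a - j), b; split; [exact: idealB | exact: sE |].
  by rewrite fE in fab; rewrite addrAC -fab addrC addKr.
have toE : forall f, ideal_add J (ideal_cap F) f -> ideal_cap (fun i => ideal_add J (E i)) f.
  move=> f [j [c [Jj Fc ->]]] i; apply/hsum; exists j, c; split => //.
split => f; split.
- exact: key.
- move=> [j [c [Jj Cc ->]]]; apply: toE; exists j, c; split => // i; exact: CF.
- move=> [j [c [Jj Cc ->]]]; exists j, c; split => // i; exact: CF.
- by move=> h; apply: key; apply: toE.
Qed.
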